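(* Let $k \geq 1$ and $n > 2k$, and let $X^0, \ldots, X^{n-1}$ each code an ordered $2k$-partition of $\omega$, $X^p = X^p_0 \oplus \cdots \oplus X^p_{2k-1}$. Then $\mathrm{Cross}(X^0,\ldots,X^{n-1};2)$ codes an ordered $2k\binom{n}{2}$-partition of $\omega$. Consequently, if $S_0, \ldots, S_{n-1}$ are classes of codes of ordered $2k$-partitions of $\omega$, then every member of $\mathrm{Cross}(S_0,\ldots,S_{n-1};2)$ codes an ordered $2k\binom{n}{2}$-partition of $\omega$.
   Context: A set $X = X_0 \oplus \cdots \oplus X_{m-1}$ codes an ordered $m$-partition of $\omega$ if $\bigcup_{i<m} X_i = \omega$ (the parts need not be disjoint). For ordered $2k$-partitions $X^0,\ldots,X^{n-1}$, $\mathrm{Cross}(X^0,\ldots,X^{n-1};2) = \bigoplus_{j<2k,\ p<q\leq n-1} (X^p_j \cap X^q_j)$ (a join of $2k\binom{n}{2}$ sets in some fixed order). For classes $S_0,\ldots,S_{n-1}$, $\mathrm{Cross}(S_0,\ldots,S_{n-1};2)$ is the class of all $\mathrm{Cross}(X^0,\ldots,X^{n-1};2)$ with $X^p \in S_p$ for each $p \leq n-1$. *)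

(* Defs.v *)
From mathcomp Require Import all_boot.
Set Implicit Arguments. Unset Strict Implicit. Unset Printing Implicit Defensive.

Definition natset := nat -> Prop.

(* join of m sets: x \in X_0 (+) ... (+) X_{m-1}  iff  x = m*y + i, i < m, y \in X_i *)
Definition join (m : nat) (F : nat -> natset) : natset :=
  fun x => F (x %% m) (x %/ m).

Definition part (m : nat) (X : natset) (i : nat) : natset :=
  fun y => X (m * y + i).

Definition codes_partition (m : nat) (X : natset) : Prop :=
  forall y : nat, exists i : nat, i < m /\ part m X i y.

Definition cross_index (k n : nat) : seq (nat * nat * nat) :=
  [seq (j, pq.1, pq.2) | j <- iota 0 (2 * k),
     pq <- [seq (p, q) | p <- iota 0 n, q <- iota p.+1 (n - p.+1)]].

Definition cross (k n : nat) (Xs : nat -> natset) : natset :=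
  join (2 * k * 'C(n, 2))
    (fun i y => let: (j, p, q) := nth (0, 0, 0) (cross_index k n) i in
                part (2 * k) (Xs p) j y /\ part (2 * k) (Xs q) j y).

Definition cross_class (k n : nat) (S : nat -> natset -> Prop) : natset -> Prop :=
  fun Y => exists Xs : nat -> natset,
    (forall p, p < n -> S p (Xs p)) /\ Y = cross k n Xs.

(* Main.v *)
Require Import Defs.
From mathcomp Require Import all_boot.
From Stdlib Require Import ClassicalEpsilon.

Lemma size_cross_index k n : size (cross_index k n) = 2 * k * 'C(n, 2).
Proof.
rewrite /cross_index size_allpairs size_iota size_allpairs_dep.
congr (_ * _).
rewrite -bin2_sum big_nat_rev /= sumnE big_map.
rewrite /index_iota subn0 add0n; apply: eq_bigr => i _.
by rewrite size_iota.
Qed.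

Lemma part_join m F i y : i < m -> part m (join m F) i y = F i y.
Proof.
move=> him; rewrite /part /join.
rewrite mulnC modnMDl modn_small // divnMDl; last by case: m him.
by rewrite divn_small // addn0.
Qed.

Lemma main k n (hn : 2 * k < n) Xs :
  (forall p, p < n -> codes_partition (2 * k) (Xs p)) ->
  codes_partition (2 * k * 'C(n, 2)) (cross k n Xs).
Proof.
move=> H y.
have hf : forall p : 'I_n, { j : 'I_(2 * k) | part (2 * k) (Xs p) j y }.
  move=> p; apply: constructive_indefinite_description.
  have [j [hj hp]] := H p (ltn_ord p) y.
  by exists (Ordinal hj).
pose f := fun p => sval (hf p).
case: (boolP (injectiveb f)) => [/injectiveP inj | /injectivePn [p [q neq eqf]]].
  by have := leq_card _ inj; rewrite !card_ord leqNgt hn.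
wlog lpq : p q neq eqf / p < q.
  move=> W; case: (ltngtP p q) => h.
  - exact: (W p q).
  - by apply: (W q p) => //; rewrite eq_sym.
  - by move: neq; rewrite (val_inj h) eqxx.
have hp := svalP (hf p); have hq := svalP (hf q).
rewrite -/(f p) in hp; rewrite -/(f q) in hq; rewrite eqf in hp.
set j := f q.
have mem : ((j : nat), (p : nat), (q : nat)) \in cross_index k n.
  rewrite /cross_index.
  apply/allpairsP; exists ((j : nat), ((p:nat), (q:nat))); split => //=.
    by rewrite mem_iota /= add0n ltn_ord.
  apply/allpairsPdep; exists (p:nat), (q:nat); split => //=.
    by rewrite mem_iota /= add0n ltn_ord.
  rewrite mem_iota lpq /= subnKC //; exact: ltn_ord.
exists (index (j : nat, p : nat, q : nat) (cross_index k n)).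
have hi : index ((j : nat), (p : nat), (q : nat)) (cross_index k n) < 2 * k * 'C(n, 2).
  by rewrite -size_cross_index index_mem.
split => //.
rewrite /cross part_join // (nth_index _ mem).
by split.
Qed.

Theorem lemma6p1 (k n : nat) (hk : 1 <= k) (hn : 2 * k < n) :
  (forall Xs : nat -> natset,
     (forall p, p < n -> codes_partition (2 * k) (Xs p)) ->
     codes_partition (2 * k * 'C(n, 2)) (cross k n Xs)) /\
  (forall S : nat -> natset -> Prop,
     (forall p, p < n -> forall X, S p X -> codes_partition (2 * k) X) ->
     forall Y, cross_class k n S Y -> codes_partition (2 * k * 'C(n, 2)) Y).
Proof.
split; first exact: main.
move=> S HS Y [Xs [HX ->]]; apply: main => // p hp.
exact: HS _ hp _ (HX p hp).
Qed.
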